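(* Let $n\ge 5$ and let $\sigma$ be a maximal simplex of $\Delta_n$ that covers all places. If $|N(w)\cap\sigma|\ge 2$ for all $w\in\sigma$, then there exist $v,w\in\sigma$ with $v$ adjacent to $w$ in $\mathbb{I}_n$ and $\sigma=N(v)\cup N(w)$.
   Context: $\mathbb{I}_n$ is the $n$-dimensional hypercube graph on vertex set $\{0,1\}^n$ (adjacent iff differing in exactly one coordinate), with Hamming distance $d(v,w)=\#\{i: v(i)\ne w(i)\}$, $v(i)$ the $i$-th coordinate. $\Delta_n=\mathcal{VR}(\mathbb{I}_n;3)$ is the simplicial complex whose simplices are the subsets $\sigma\subseteq\{0,1\}^n$ with $d(x,y)\le 3$ for all $x,y\in\sigma$. A simplex $\sigma$ covers all places if for each $i\in[n]=\{1,\dots,n\}$ there are $v,w\in\sigma$ with $v(i)=1$ and $w(i)=0$. $N(v)$ denotes the set of the $n$ vertices adjacent to $v$ in $\mathbb{I}_n$. *)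

(* Defs.v *)
From mathcomp Require Import all_boot.
Set Implicit Arguments. Unset Strict Implicit. Unset Printing Implicit Defensive.

(* Vertices of the hypercube I_n: functions [n] -> {0,1}, coordinates indexed by 'I_n. *)
Definition vert (n : nat) := {ffun 'I_n -> bool}.

Definition hdist (n : nat) (v w : vert n) : nat := #|[set i | v i != w i]|.

Definition adj (n : nat) (v w : vert n) : bool := hdist v w == 1.

Definition nbhd (n : nat) (v : vert n) : {set vert n} := [set w | adj v w].

(* simplices of Delta_n = VR(I_n; 3): nonempty vertex sets of diameter <= 3 *)
Definition is_simplex (n : nat) (s : {set vert n}) : bool :=
  (s != set0) && [forall x in s, forall y in s, hdist x y <= 3].

Definition is_maximal_simplex (n : nat) (s : {set vert n}) : bool :=
  is_simplex s && [forall t : {set vert n}, (s \proper t) ==> ~~ is_simplex t].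

Definition covers_all_places (n : nat) (s : {set vert n}) : bool :=
  [forall i : 'I_n, exists v in s, exists w in s, v i && ~~ w i].

(* Main.v *)
Require Import Defs.
From mathcomp Require Import all_boot.
From mathcomp Require Import zify.
Set Implicit Arguments. Unset Strict Implicit. Unset Printing Implicit Defensive.


Definition flip n (u : vert n) (i : 'I_n) : vert n :=
  [ffun m => if m == i then ~~ u m else u m].

Lemma flipE n (u : vert n) i m : flip u i m = if m == i then ~~ u i else u m.
Proof. by rewrite /flip ffunE; case: eqP => // ->. Qed.

Lemma hdistE n (u v : vert n) : hdist u v = \sum_m (u m != v m).
Proof.
rewrite /hdist -sum1_card big_mkcond /=; apply: eq_bigr => m _.
by rewrite inE; case: (u m != v m).
Qed.

Lemma hdist_sym n (u v : vert n) : hdist u v = hdist v u.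
Proof. by rewrite !hdistE; apply: eq_bigr => m _; rewrite eq_sym. Qed.

Lemma hdist0 n (u : vert n) : hdist u u = 0.
Proof. by rewrite hdistE big1 // => m _; rewrite eqxx. Qed.

Lemma hdist_flip n (u v : vert n) i :
  hdist (flip u i) v + (u i != v i) = hdist u v + (u i == v i).
Proof.
rewrite !hdistE (bigD1 i) //= [X in _ = X + _](bigD1 i) //= flipE eqxx.
have -> : \sum_(m | m != i) (flip u i m != v m) = \sum_(m | m != i) (u m != v m).
  by apply: eq_bigr => m /negbTE hm; rewrite flipE hm.
by case: (u i); case: (v i) => /=; lia.
Qed.

Lemma hdist_flipr n (u v : vert n) i :
  hdist v (flip u i) + (u i != v i) = hdist v u + (u i == v i).
Proof. by rewrite hdist_sym [hdist v u]hdist_sym hdist_flip. Qed.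

Lemma odd_flip n (u v : vert n) i : odd (hdist v (flip u i)) = ~~ odd (hdist v u).
Proof.
move: (hdist_flipr u v i); case: (u i == v i) => /= h.
- have -> : hdist v (flip u i) = (hdist v u).+1 by lia. by [].
- have -> : hdist v u = (hdist v (flip u i)).+1 by lia. by rewrite /= negbK.
Qed.

Lemma adj_flip n (u : vert n) i : adj u (flip u i).
Proof.
rewrite /adj hdist_sym; have := hdist_flip u u i; rewrite eqxx hdist0 /= => h.
apply/eqP; lia.
Qed.

Lemma adjP n (u v : vert n) : adj u v -> exists i, v = flip u i.
Proof.
rewrite /adj /hdist => /cards1P [i hi]; exists i; apply/ffunP => m.
rewrite flipE; case: eqP => [->|/eqP hm].
- have : i \in [set m | u m != v m] by rewrite hi set11.
  by rewrite inE; case: (u i); case: (v i).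
- have : m \notin [set m | u m != v m] by rewrite hi in_set1.
  by rewrite inE negbK => /eqP.
Qed.

Lemma adj_sym n (u v : vert n) : adj u v = adj v u.
Proof. by rewrite /adj hdist_sym. Qed.

Lemma flipK n (u : vert n) i : flip (flip u i) i = u.
Proof.
apply/ffunP => m; rewrite !flipE; case: (eqVneq m i) => [->|h];
  by rewrite ?eqxx ?negbK ?(negbTE h).
Qed.

Lemma flipC n (u : vert n) i j : flip (flip u i) j = flip (flip u j) i.
Proof.
apply/ffunP => m; rewrite !flipE.
case: (eqVneq m i) => hi; case: (eqVneq m j) => hj //=; subst => //.
all: try by rewrite eqxx.
all: try by rewrite (negbTE hi).
all: try by rewrite (negbTE hj).
Qed.

Lemma hdist_tri n (u v w : vert n) : hdist u w <= hdist u v + hdist v w.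
Proof.
rewrite !hdistE -big_split /=; apply: leq_sum => m _.
by case: (u m); case: (v m); case: (w m).
Qed.


Definition R3 n (w v : vert n) (i j k : 'I_n) :=
  \sum_(m | [&& m != i, m != j & m != k]) (w m != v m).

Lemma hdist3 n (w v : vert n) i j k : j != i -> k != i -> k != j ->
  hdist w v = (w i != v i) + (w j != v j) + (w k != v k) + R3 w v i j k.
Proof.
move=> ji ki kj.
rewrite hdistE (bigD1 i) //= (bigD1 j) //= (bigD1 k) /=; last by rewrite ki kj.
rewrite !addnA /R3; congr (_ + _).
by apply: eq_bigl => m; rewrite andbA.
Qed.

Lemma R3_same n (w v o : vert n) i j k :
  (forall m, [&& m != i, m != j & m != k] -> v m = o m) -> R3 w v i j k = R3 w o i j k.
Proof. by move=> h; apply: eq_bigr => m /h ->. Qed.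

Lemma arith3 (a b c : bool) r : (~~a + b + c + r <= 3) -> (a + ~~b + c + r <= 3) ->
  (a + b + ~~c + r <= 3) -> (~~a + ~~b + ~~c + r <= 3) -> 0 < r -> r <= 1 /\ odd (a + b + c).
Proof. case: a; case: b; case: c => /= h1 h2 h3 h4 h5; rewrite ?addn0 ?add0n in h1 h2 h3 h4 *. all: split=> //; try lia. Qed.

Lemma good_char n (o w : vert n) (i j k c : 'I_n) :
 j != i -> k != i -> k != j -> [&& c != i, c != j & c != k] -> w c != o c ->
 hdist w (flip o i) <= 3 -> hdist w (flip o j) <= 3 -> hdist w (flip o k) <= 3 ->
 hdist w (flip (flip (flip o i) j) k) <= 3 ->
 (forall m, [&& m != i, m != j, m != k & m != c] -> w m = o m) /\
 odd ((w i != o i) + (w j != o j) + (w k != o k)).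
Proof.
move=> ji ki kj hc wc.
rewrite !(hdist3 _ _ ji ki kj).
have ij : i != j by rewrite eq_sym.
have ik : i != k by rewrite eq_sym.
have jk : j != k by rewrite eq_sym.
rewrite !flipE !eqxx (negbTE ij) (negbTE ik) (negbTE jk) (negbTE ji) (negbTE ki) (negbTE kj).
have same : forall v : vert n, (forall m, [&& m != i, m != j & m != k] -> v m = o m) ->
   R3 w v i j k = R3 w o i j k by move=> v; exact: R3_same.
have fo : forall m, [&& m != i, m != j & m != k] -> flip o i m = o m /\ flip o j m = o m /\
   flip o k m = o m /\ flip (flip (flip o i) j) k m = o m.
  by move=> m /and3P [mi mj mk]; rewrite !flipE (negbTE mi) (negbTE mj) (negbTE mk).
rewrite (same (flip o i)); last by move=> m /fo [].
rewrite (same (flip o j)); last by move=> m /fo [_ []].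
rewrite (same (flip o k)); last by move=> m /fo [_ [_ []]].
rewrite (same (flip (flip (flip o i) j) k)); last by move=> m /fo [_ [_ [_ ]]].
have R1 : 1 <= R3 w o i j k.
  by rewrite /R3 (bigD1 c) //= wc.
move=> h1 h2 h3 h4.
have hR : R3 w o i j k <= 1 /\ odd ((w i != o i) + (w j != o j) + (w k != o k)).
  move: h1 h2 h3 h4 R1; move: (R3 w o i j k) => r.
  have e : forall a b : bool, (a != ~~ b) = ~~ (a != b) by case; case.
  rewrite !e; exact: arith3.
case: hR => hR hodd; split => // m /and4P [mi mj mk mc].
apply/eqP; apply: contraTT hR => hm; rewrite -ltnNge.
by rewrite /R3 (bigD1 c) //= (bigD1 m) /=; [rewrite wc hm | rewrite mi mj mk mc].
Qed.


Lemma out_set n (A : {set 'I_n}) : #|A| < n -> exists c, c \notin A.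
Proof.
move=> h; have : 0 < #|~: A| by have := cardsC A; rewrite card_ord; lia.
by case/card_gt0P => c; rewrite inE => hc; exists c.
Qed.

Lemma extra_coord n (i j k : 'I_n) : 4 <= n -> exists c : 'I_n, [&& c != i, c != j & c != k].
Proof.
move=> n4.
have [|c] := @out_set n [set x in [:: i; j; k]].
  by rewrite cardsE; apply: leq_ltn_trans (card_size _) _.
by rewrite !inE !negb_or => h; exists c.
Qed.

Lemma two_nbrs n (s : {set vert n}) w : 2 <= #|nbhd w :&: s| ->
  exists i j, [/\ i != j, flip w i \in s & flip w j \in s].
Proof.
move=> /card_gt1P [a [b [ha hb ab]]]; move: ha hb; rewrite !inE.
move=> /andP [ha ai] /andP [hb bj]; case: (adjP ha) => i ei; case: (adjP hb) => j ej; subst a b.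
by exists i, j; split => //; apply: contraNneq ab => ->.
Qed.

Lemma noTetra n (s : {set vert n}) (o : vert n) i j k :
 4 <= n ->
 (forall x y, x \in s -> y \in s -> hdist x y <= 3) ->
 (forall w, w \in s -> exists p q, [/\ p != q, flip w p \in s & flip w q \in s]) ->
 covers_all_places s ->
 j != i -> k != i -> k != j ->
 flip o i \in s -> flip o j \in s -> flip o k \in s -> flip (flip (flip o i) j) k \in s -> False.
Proof.
move=> n4 Hs Hdeg Hcov ji ki kj h1 h2 h3 h4.
have [c hc] := extra_coord i j k n4.
have [z [zs zc]] : exists z, z \in s /\ z c != o c.
  move/forallP: Hcov => /(_ c) /existsP [v /andP [vs /existsP [v' /andP [v's /andP [vc v'c]]]]].
  case: (eqVneq (v c) (o c)) => e; last by exists v.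
  by exists v'; split => //; rewrite -e vc (negbTE v'c).
have [p [pc ps]] : exists p, p != c /\ flip z p \in s.
  have [p [q [pq ps qs]]] := Hdeg z zs.
  case: (eqVneq p c) => e; last by exists p.
  by exists q; split => //; rewrite -e eq_sym.
have good (y : vert n) : y \in s -> y c != o c ->
   (forall m, [&& m != i, m != j, m != k & m != c] -> y m = o m) /\
   odd ((y i != o i) + (y j != o j) + (y k != o k)).
  move=> ys yc.
  exact: (good_char ji ki kj hc yc (Hs _ _ ys h1) (Hs _ _ ys h2) (Hs _ _ ys h3) (Hs _ _ ys h4)).
have [g1 o1] := good z zs zc.
have cp : (c == p) = false by rewrite eq_sym (negbTE pc).
have pc' : flip z p c != o c by rewrite flipE cp.
have [g2 o2] := good (flip z p) ps pc'.
have ij : i != j by rewrite eq_sym.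
have ik : i != k by rewrite eq_sym.
have jk : j != k by rewrite eq_sym.
move: o1 o2; rewrite !flipE.
case: (eqVneq i p) => [<-|ip]; rewrite ?eqxx.
  rewrite ?(negbTE ji) ?(negbTE ki) !oddD.
  by move: (z j != o j) (z k != o k) => a b; case: (z i); case: (o i); case: a; case: b.
case: (eqVneq j p) => [<-|jp]; rewrite ?eqxx.
  rewrite ?(negbTE ij) ?(negbTE kj) !oddD.
  by move: (z i != o i) (z k != o k) => a b; case: (z j); case: (o j); case: a; case: b.
case: (eqVneq k p) => [<-|kp]; rewrite ?eqxx.
  rewrite ?(negbTE ik) ?(negbTE jk) !oddD.
  by move: (z i != o i) (z j != o j) => a b; case: (z k); case: (o k); case: a; case: b.
move=> _ _.
have hp : [&& p != i, p != j, p != k & p != c] by apply/and4P; split => //; rewrite eq_sym.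
have := g2 p hp; rewrite flipE eqxx (g1 p hp).
by case: (o p).
Qed.


Lemma oddE D : odd D -> exists q, D = q * 2 + 1.
Proof. move=> h; exists D./2; have := odd_double_half D; rewrite h -muln2; lia. Qed.

Lemma evenE D : ~~ odd D -> exists q, D = q * 2.
Proof. move=> /negbTE h; exists D./2; have := odd_double_half D; rewrite h -muln2; lia. Qed.

Lemma arith_c1 (D X Y q r t : nat) (bi bj : bool) : D = q*2+1 -> X = r*2 -> Y = t*2 ->
  X <= 3 -> Y <= 3 -> X + ~~bi = D + bi -> Y + ~~bj = D + bj ->
  D = 1 \/ [/\ D = 3, bi = false, bj = false & X = 2].
Proof.
move=> hD hX hY h1 h2.
have [X0|X2] : X = 0 \/ X = 2 by lia.
  by move=> h3 h4; left; move: h3 h4; case: bi; case: bj => /=; lia.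
case: bi; case: bj => /= h3 h4; try (left; lia).
by right; split => //; lia.
Qed.

Lemma center n (s : {set vert n}) (b : vert n) :
 4 <= n ->
 (forall x y, x \in s -> y \in s -> hdist x y <= 3) ->
 (forall w, w \in s -> exists p q, [/\ p != q, flip w p \in s & flip w q \in s]) ->
 covers_all_places s -> b \in s ->
 exists x : vert n, (forall e, odd (hdist e x) = odd (hdist e b)) /\
   (forall e, e \in s -> odd (hdist e b) -> adj x e).
Proof.
move=> n4 Hs Hdeg Hcov bs.
have [i [j [ij h1 h2]]] := Hdeg b bs.
have ji : j != i by rewrite eq_sym.
have jiF : (j == i) = false by apply: negbTE.
set o' := flip (flip b i) j.
have claim1 : forall e, e \in s -> odd (hdist e b) -> adj b e \/ adj o' e.
  move=> e es oe.
  have X3 := Hs _ _ es h1; have Y3 := Hs _ _ es h2.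
  have hX := hdist_flipr b e i; have hY := hdist_flipr b e j.
  have [q hq] := oddE oe.
  have oX : ~~ odd (hdist e (flip b i)) by rewrite odd_flip oe.
  have oY : ~~ odd (hdist e (flip b j)) by rewrite odd_flip oe.
  have [r hr] := evenE oX; have [t ht] := evenE oY.
  case: (arith_c1 hq hr ht X3 Y3 hX hY) => [D1|[D3 bi bj X2]].
    by left; rewrite /adj hdist_sym D1.
  right; have := hdist_flipr (flip b i) e j.
  rewrite flipE jiF bj X2 addn1 addn0 => -[h].
  by rewrite /adj hdist_sym /o' h.
have claim2 : forall e3 e4, e3 \in s -> e4 \in s -> adj b e3 -> ~~ adj o' e3 ->
    adj o' e4 -> ~~ adj b e4 -> False.
  move=> e3 e4 s3 s4 a3 n3 a4 n4'.
  case: (adjP a3) => k ek; subst e3.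
  case: (adjP a4) => m em; subst e4.
  have ki : k != i.
    by apply: contraNneq n3 => ->; rewrite adj_sym /o' adj_flip.
  have kj : k != j.
    by apply: contraNneq n3 => ->; rewrite adj_sym /o' flipC adj_flip.
  have mj : m != j.
    by apply: contraNneq n4' => ->; rewrite /o' flipK adj_flip.
  have mi : m != i.
    by apply: contraNneq n4' => ->; rewrite /o' flipC flipK adj_flip.
  case: (eqVneq k m) => [km|km].
    subst m; exact: (noTetra n4 Hs Hdeg Hcov ji ki kj h1 h2 s3 s4).
  have d1 : hdist b (flip b i) = 1 by apply/eqP; exact: adj_flip.
  have d2 : hdist b o' = 2.
    have := hdist_flipr (flip b i) b j.
    by rewrite flipE jiF eqxx d1 /= addn0 => ->.
  have d3 : hdist b (flip o' m) = 3.
    have := hdist_flipr o' b m.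
    by rewrite /o' !flipE (negbTE mj) (negbTE mi) eqxx -/o' d2 /= addn0 => ->.
  have d4 : hdist (flip b k) (flip o' m) = 4.
    have := hdist_flip b (flip o' m) k.
    by rewrite /o' !flipE (negbTE km) (negbTE kj) (negbTE ki) eqxx -/o' d3 /= addn0 => ->.
  by have := Hs _ _ s3 s4; rewrite d4.
case: (boolP [exists e in s, odd (hdist e b) && ~~ adj b e]) => H.
- case/existsP: H => e4 /andP [s4 /andP [o4 n4']].
  have a4 : adj o' e4.
    by case: (claim1 e4 s4 o4) => // h; rewrite h in n4'.
  exists o'; split.
    by move=> e; rewrite /o' !odd_flip negbK.
  move=> e es oe; case: (claim1 e es oe) => // ab.
  case: (boolP (adj o' e)) => // no.
  by exfalso; exact: (claim2 e e4 es s4 ab no a4 n4').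
- exists b; split => // e es oe.
  by move/existsPn: H => /(_ e); rewrite es oe /= negbK.
Qed.


Lemma odd13 d : odd d -> d <= 3 -> d = 1 \/ d = 3.
Proof. case: d => [|[|[|[|d]]]] //=; by [left | right]. Qed.

Lemma near n (a c u v : vert n) : adj a u -> adj c v -> hdist a c <= 1 -> hdist u v <= 3.
Proof.
move=> /eqP au /eqP cv ac.
have t1 := hdist_tri u a v; have t2 := hdist_tri a c v.
rewrite [hdist u a]hdist_sym au in t1; rewrite cv in t2.
apply: (leq_trans t1); rewrite add1n ltnS (leq_trans t2) //.
by rewrite -(addn1 1) leq_add2r.
Qed.

Unset Implicit Arguments.

Theorem mainTheorem11 (n : nat) (s : {set vert n}) :
  5 <= n ->
  is_maximal_simplex s ->
  covers_all_places s ->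
  (forall w, w \in s -> 2 <= #|nbhd w :&: s|) ->
  exists v w, [/\ v \in s, w \in s, adj v w & s = nbhd v :|: nbhd w].
Proof.
move=> n5 /andP [simp max] Hcov Hdeg0.
have n4 : 4 <= n by apply: ltnW.
have Hs : forall x y, x \in s -> y \in s -> hdist x y <= 3.
  move: simp => /andP [_ /forallP H] x y xs ys.
  by move: (H x) => /implyP /(_ xs) /forallP /(_ y) /implyP /(_ ys).
have Hdeg : forall w, w \in s -> exists p q, [/\ p != q, flip w p \in s & flip w q \in s].
  by move=> w ws; exact: two_nbrs (Hdeg0 w ws).
have [b bs] : exists b, b \in s.
  by move: simp => /andP [/set0Pn [b bs] _]; exists b.
have [x [px1 px2]] := center n4 Hs Hdeg Hcov bs.
have [i [j [_ e1s _]]] := Hdeg b bs.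
have [y [py1 py2]] := center n4 Hs Hdeg Hcov e1s.
have A : forall e, e \in s -> if odd (hdist e b) then adj x e else adj y e.
  move=> e es; case: ifP => oe; first exact: px2.
  by apply: py2 => //; rewrite odd_flip oe.
have oxy : odd (hdist x y) by rewrite py1 odd_flip -px1 hdist0.
have ayb : adj y b by have := A b bs; rewrite hdist0.
have axe1 : adj x (flip b i) by have := A _ e1s; rewrite hdist_sym odd_flip hdist0.
have xy3 : hdist x y <= 3.
  have t1 := hdist_tri x (flip b i) y; have t2 := hdist_tri (flip b i) b y.
  move/eqP: axe1 => d1.
  have d2 : hdist (flip b i) b = 1 by rewrite hdist_sym; apply/eqP; apply: adj_flip.
  move/eqP: ayb; rewrite hdist_sym => d3.
  apply: (leq_trans t1); rewrite d1 add1n ltnS (leq_trans t2) //.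
  by rewrite d2 d3.
have xy1 : hdist x y = 1.
  have [//|D3] := odd13 oxy xy3.
  exfalso.
  have [c hc] : exists c, c \notin [set m | x m != y m].
    by apply: out_set; change (hdist x y < n); rewrite D3.
  rewrite inE negbK in hc.
  have [z [zs zc]] : exists z, z \in s /\ z c != x c.
    move/forallP: Hcov => /(_ c) /existsP [v /andP [vs /existsP [v' /andP [v's /andP [vc v'c]]]]].
    case: (eqVneq (v c) (x c)) => e; last by exists v.
    by exists v'; split => //; rewrite -e vc (negbTE v'c).
  have [p [q [_ gs _]]] := Hdeg z zs.
  have og : odd (hdist (flip z p) b) = ~~ odd (hdist z b).
    by rewrite hdist_sym odd_flip hdist_sym.
  have dg : hdist z (flip z p) = 1 by apply/eqP; apply: adj_flip.
  have tri := hdist_tri z (flip z p).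
  have := A z zs; have := A _ gs; rewrite og; case: (odd (hdist z b)) => /= ag az.
  + case: (adjP az) => m zm.
    case: (eqVneq m c) => [mc|mc]; last first.
      have cm : (c == m) = false by rewrite eq_sym (negbTE mc).
      by move: zc; rewrite zm flipE cm eqxx.
    subst m.
    have := hdist_flip x y c; rewrite hc -zm D3 /= addn0 => dzy.
    move/eqP: ag; rewrite hdist_sym => dgy.
    by have := tri y; rewrite dzy dg dgy.
  + case: (adjP az) => m zm.
    case: (eqVneq m c) => [mc|mc]; last first.
      have cm : (c == m) = false by rewrite eq_sym (negbTE mc).
      by move: zc; rewrite zm flipE cm (eqP hc) eqxx.
    subst m.
    have := hdist_flip y x c; rewrite [hdist y x]hdist_sym D3 (eq_sym (y c)) hc -zm /= addn0 => dzx.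
    move/eqP: ag; rewrite hdist_sym => dgx.
    by have := tri x; rewrite dzx dg dgx.
have axy : adj x y by rewrite /adj xy1.
set T := nbhd x :|: nbhd y.
have sub : s \subset T.
  apply/subsetP => e es; have := A e es; rewrite !inE.
  by case: odd => ->; rewrite ?orbT.
have Tsimp : is_simplex T.
  apply/andP; split.
    by apply/set0Pn; exists y; rewrite !inE axy.
  apply/forallP => u; apply/implyP; rewrite !inE => hu.
  apply/forallP => v; apply/implyP; rewrite !inE => hv.
  case/orP: hu => hu; case/orP: hv => hv.
  - by apply: (near hu hv); rewrite hdist0.
  - by apply: (near hu hv); rewrite xy1.
  - by apply: (near hu hv); rewrite hdist_sym xy1.
  - by apply: (near hu hv); rewrite hdist0.
case/eqVproper: sub => [sT|prop]; last first.
  by move/forallP: max => /(_ T); rewrite prop Tsimp.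
exists x, y; split => //; rewrite sT !inE.
  by rewrite adj_sym axy orbT.
by rewrite axy.
Qed.
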